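(* Let $x \in \mathbb{R}^n$ and let $(B_i)_{i \geq 1}$ be a sequence of open balls in $\mathbb{R}^n$ with unbounded radii such that $x \in B_i$ for every $i$. Then $B = \bigcup_{i \geq 1} B_i$ contains an open halfspace $H$ with $x \in \mathrm{bd}(H)$.
   Context: $\mathrm{bd}(X) = \overline{X} \cap \overline{\mathbb{R}^n \setminus X}$ denotes the topological boundary of $X \subseteq \mathbb{R}^n$. An open halfspace is a set of the form $\{y \in \mathbb{R}^n : a\cdot y > b\}$ with $a \neq 0$. *)

(* Defs.v *)
(* R^n is 'rV[R]_n for R : realType. *)
From HB Require Import structures.
From mathcomp Require Import all_boot all_order all_algebra.
From mathcomp Require Import all_classical all_reals all_analysis.
Set Implicit Arguments. Unset Strict Implicit. Unset Printing Implicit Defensive.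
Import Order.TTheory GRing.Theory Num.Theory.
Import numFieldNormedType.Exports.
Local Open Scope classical_set_scope.
Local Open Scope ring_scope.

Definition dotv (R : realType) (n : nat) (a y : 'rV[R]_n) : R :=
  \sum_(i < n) a 0 i * y 0 i.

Definition enorm (R : realType) (n : nat) (v : 'rV[R]_n) : R :=
  Num.sqrt (dotv v v).

Definition eball (R : realType) (n : nat) (c : 'rV[R]_n) (r : R) : set 'rV[R]_n :=
  [set y | enorm (y - c) < r].

Definition open_halfspace (R : realType) (n : nat) (H : set 'rV[R]_n) : Prop :=
  exists (a : 'rV[R]_n) (b : R), a != 0 /\ H = [set y | b < dotv a y].

(* topological boundary bd(X) = cl(X) /\ cl(R^n \ X); the topology on 'rV[R]_n is
   the product topology, which coincides with the Euclidean one. *)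
Definition bd (R : realType) (n : nat) (X : set 'rV[R]_n) : set 'rV[R]_n :=
  closure X `&` closure (~` X).

(* Main.v *)
Require Import Defs.
From HB Require Import structures.
From mathcomp Require Import all_boot all_order all_algebra.
From mathcomp Require Import all_classical all_reals all_analysis.
From mathcomp Require Import lra.
Import Order.TTheory GRing.Theory Num.Theory.
Import numFieldNormedType.Exports.
Local Open Scope classical_set_scope.
Local Open Scope ring_scope.

Lemma dotvC {R : realType} {n : nat} (a b : 'rV[R]_n) : dotv a b = dotv b a.
Proof. by apply: eq_bigr => i _; rewrite mulrC. Qed.

Lemma dotvDr {R : realType} {n : nat} (a b z : 'rV[R]_n) : dotv a (b + z) = dotv a b + dotv a z.
Proof. by rewrite /dotv -big_split; apply: eq_bigr => i _; rewrite !mxE mulrDr. Qed.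

Lemma dotvNr {R : realType} {n : nat} (a b : 'rV[R]_n) : dotv a (- b) = - dotv a b.
Proof. by rewrite /dotv -sumrN; apply: eq_bigr => i _; rewrite !mxE mulrN. Qed.

Lemma dotvBr {R : realType} {n : nat} (a b z : 'rV[R]_n) : dotv a (b - z) = dotv a b - dotv a z.
Proof. by rewrite dotvDr dotvNr. Qed.

Lemma dotvZr {R : realType} {n : nat} (a b : 'rV[R]_n) (k : R) : dotv a (k *: b) = k * dotv a b.
Proof. by rewrite /dotv mulr_sumr; apply: eq_bigr => i _; rewrite !mxE mulrCA. Qed.

Lemma dotvDl {R : realType} {n : nat} (a b z : 'rV[R]_n) : dotv (b + z) a = dotv b a + dotv z a.
Proof. by rewrite dotvC dotvDr !(dotvC a). Qed.

Lemma dotvNl {R : realType} {n : nat} (a b : 'rV[R]_n) : dotv (- b) a = - dotv b a.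
Proof. by rewrite dotvC dotvNr dotvC. Qed.

Lemma dotvBl {R : realType} {n : nat} (a b z : 'rV[R]_n) : dotv (b - z) a = dotv b a - dotv z a.
Proof. by rewrite dotvDl dotvNl. Qed.

Lemma dotv_ge0 {R : realType} {n : nat} (a : 'rV[R]_n) : 0 <= dotv a a.
Proof. by apply: sumr_ge0 => i _; rewrite -expr2 sqr_ge0. Qed.

Lemma dotv_coord {R : realType} {n : nat} (a : 'rV[R]_n) (j : 'I_n) : a 0 j ^+ 2 <= dotv a a.
Proof.
rewrite /dotv (bigD1 j) //= expr2 lerDl.
by apply: sumr_ge0 => i _; rewrite -expr2 sqr_ge0.
Qed.

Lemma dotv_bound {R : realType} {n : nat} (w a b : 'rV[R]_n) (e : R) : (forall j, `|a 0 j - b 0 j| < e) ->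
  `|dotv w a - dotv w b| <= (\sum_(j < n) `|w 0 j|) * e.
Proof.
move=> H; rewrite -dotvBr /dotv mulr_suml.
apply: le_trans (ler_norm_sum _ _ _) _.
apply: ler_sum => j _; rewrite !mxE normrM ler_wpM2l //.
exact: ltW.
Qed.

Lemma enorm_ltE {R : realType} {n : nat} (a : 'rV[R]_n) (r : R) : 0 < r -> (enorm a < r) = (dotv a a < r ^+ 2).
Proof.
move=> r0; rewrite /enorm -{1}(ger0_norm (ltW r0)) -sqrtr_sqr ltr_sqrt //.
exact: exprn_gt0.
Qed.

Lemma enorm_sqr {R : realType} {n : nat} (a : 'rV[R]_n) : enorm a ^+ 2 = dotv a a.
Proof. by rewrite /enorm sqr_sqrtr // dotv_ge0. Qed.

Lemma enorm_ge0 {R : realType} {n : nat} (a : 'rV[R]_n) : 0 <= enorm a.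
Proof. exact: sqrtr_ge0. Qed.

Lemma ballrV {R : realType} {n : nat} (x y : 'rV[R]_n) e : ball x e y -> forall j, `|x 0 j - y 0 j| < e.
Proof. move=> [e0 H] j. have := H 0 j. rewrite /ball /=. done. Qed.
Lemma ballrV2 {R : realType} {n : nat} (x y : 'rV[R]_n) e : 0 < e -> (forall j, `|x 0 j - y 0 j| < e) -> ball x e y.
Proof. move=> e0 H. split => // i j. rewrite (ord1 i). exact: H. Qed.


Lemma cluster_exists (R : realType) n (v : nat -> 'rV[R]_n)
  (hv : forall k j, `|v k 0 j| <= 1) : exists a : 'rV[R]_n,
  forall e, 0 < e -> forall N, exists k, (N <= k)%N /\ forall j, `|v k 0 j - a 0 j| < e.
Proof.
pose K := [set w : 'rV[R]_n | forall i, `[(-1 : R), 1]%classic (w 0 i)].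
have cK : compact K by apply: (@rV_compact _ _ (fun=> `[(-1 : R), 1]%classic)) => i; exact: segment_compact.
have FK : (v @ \oo) K.
  have H : \forall k \near \oo, K (v k).
    by apply: filterE => k i /=; rewrite in_itv /= -ler_norml; exact: (hv k i).
  exact: H.
have [a [_ cla]] := cK _ _ FK.
move: a cla => /= a cla.
exists a => e e0 N.
have FA : (v @ \oo) [set w | exists k, (N <= k)%N /\ w = v k].
  by exists N => // k /= Nk; exists k.
have [w [[k [Nk ->]] bw]] := cla _ _ FA (nbhsx_ballx a e e0).
exists k; split => // j; rewrite distrC; exact: ballrV bw j.
Qed.

Lemma normle1 (R : realType) (y : R) : y ^+ 2 <= 1 -> `|y| <= 1.
Proof. move=> h; have h1 := normr_ge0 y; have h2 := real_normK (num_real y); nra. Qed.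

Lemma coord_le_sum (R : realType) n (w : 'rV[R]_n) j : `|w 0 j| <= \sum_(i < n) `|w 0 i|.
Proof. by rewrite (bigD1 j) //= lerDl sumr_ge0. Qed.

Theorem lemma1 (R : realType) (n : nat) (hn : (0 < n)%N) (x : 'rV[R]_n)
    (c : nat -> 'rV[R]_n) (r : nat -> R)
    (hr : forall i, 0 < r i)
    (hunb : forall M : R, exists i, M < r i)
    (hx : forall i, eball (c i) (r i) x) :
  exists H : set 'rV[R]_n,
    open_halfspace H /\ H `<=` \bigcup_i eball (c i) (r i) /\ bd H x.
Proof.
pose j0 := Ordinal hn.
pose e0 : 'rV[R]_n := delta_mx 0 j0.
have e0n : dotv e0 e0 = 1.
  rewrite /dotv (bigD1 j0) //= big1 => [|j /negbTE hj]; rewrite !mxE ?eqxx ?hj /=.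
    by rewrite mulr1 addr0.
  by rewrite mul0r.
pose d i := enorm (x - c i).
pose u i := if 0 < d i then (d i)^-1 *: (c i - x) else e0.
have un : forall i, dotv (u i) (u i) = 1.
  move=> i; rewrite /u; case: ifP => [dp|_]; last exact: e0n.
  rewrite dotvZr dotvC dotvZr -opprB dotvNr dotvC dotvNr opprK -enorm_sqr -/(d i).
  by rewrite mulrA -expr2 -exprMn mulVf ?expr1n // gt_eqF.
have uc : forall i j, `|u i 0 j| <= 1.
  by move=> i j; apply: normle1; rewrite -(un i); exact: dotv_coord.
pose I k := projT1 (cid (hunb k%:R)).
have hI : forall k, k%:R < r (I k) := fun k => projT2 (cid (hunb k%:R)).
pose v k := u (I k).
have [a ha] := @cluster_exists R n v (fun k j => uc (I k) j).
have [j aj] : exists j, a 0 j != 0.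
  case/boolP: [forall j, a 0 j == 0] => [/forallP a0 | /forallPn [j aj]]; last by exists j.
  exfalso.
  pose m : R := n%:R.
  have m0 : 0 <= m by rewrite /m ler0n.
  pose eps := (m + 1)^-1.
  have eps0 : 0 < eps by rewrite /eps invr_gt0; lra.
  have epsm : eps * (m + 1) = 1 by rewrite /eps mulVf //; apply/eqP; lra.
  have [k [_ hk]] := ha eps eps0 0%N.
  have : dotv (v k) (v k) <= \sum_(j < n) eps ^+ 2.
    apply: ler_sum => j _; rewrite -expr2.
    have := hk j; rewrite (eqP (a0 j)) subr0 => h.
    have h1 := normr_ge0 (v k 0 j); have h2 := real_normK (num_real (v k 0 j)); nra.
  rewrite un sumr_const card_ord -/m => hh.
  have : m * eps ^+ 2 < 1 by nra.
  move: hh; rewrite -[_ *+ n]mulr_natl -/m; lra.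
have aa : 0 < dotv a a.
  have h := dotv_coord a j.
  have : 0 < a 0 j ^+ 2 by rewrite lt_def sqrf_eq0 aj sqr_ge0.
  lra.
have anz : a != 0.
  by apply/eqP => a0; move: aj; rewrite a0 mxE eqxx.
exists [set y | dotv a x < dotv a y].
split; first by exists a, (dotv a x).
split.
  move=> y /= Hy.
  pose w := y - x.
  pose s := dotv a w.
  have s0 : 0 < s by rewrite /s /w dotvBr subr_gt0.
  pose t2 := dotv w w.
  have t20 : 0 <= t2 := dotv_ge0 w.
  pose S1 := \sum_(j < n) `|w 0 j|.
  have S10 : 0 <= S1 by apply: sumr_ge0.
  pose eps := s / (2 * (S1 + 1)).
  have eps0 : 0 < eps by apply: divr_gt0 => //; lra.
  have epsS : S1 * eps <= s / 2.
    have E : eps * (2 * (S1 + 1)) = s by rewrite /eps mulfVK //; apply/eqP; lra.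
    nra.
  pose K := t2 / s.
  have K0 : 0 <= K by apply: divr_ge0 => //; exact: ltW.
  have Ks : K * s = t2 by rewrite /K mulrVK // unitfE gt_eqF.
  pose M := 2 * (t2 + K ^+ 2) + 1.
  have [k [Nk hk]] := ha eps eps0 (Num.trunc M).+1.
  pose i := I k.
  have rM : M < r i.
    apply: lt_trans (hI k); apply: lt_le_trans (truncnS_gt M) _.
    by rewrite ler_nat.
  exists i => //.
  rewrite /eball /= enorm_ltE //.
  pose z := x - c i.
  have yc : y - c i = w + z by rewrite /w /z addrA subrK.
  rewrite yc (dotvDl (w+z) w z) (dotvDr w w z) (dotvDr z w z) (dotvC z w) -/t2.
  have hD := hx i; rewrite /eball /= enorm_ltE // in hD.
  rewrite -/z in hD.
  have M1 : 1 <= M by rewrite /M; nra.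
  have rM2 : M ^+ 2 < r i ^+ 2.
    have f : 0 < (r i - M) * (r i + M) by apply: mulr_gt0; lra.
    move: f; rewrite mulrDr !mulrBl -!expr2 (mulrC M); lra.
  have wz1 : 0 <= dotv (w - z) (w - z) := dotv_ge0 _.
  rewrite (dotvBl (w-z) w z) (dotvBr w w z) (dotvBr z w z) (dotvC z w) -/t2 in wz1.
  case: (ltP (2 * t2 + 2 * dotv z z) (r i ^+ 2)) => hA; first lra.
  have dK : K ^+ 2 < dotv z z.
    have hM : M = 2 * (t2 + K ^+ 2) + 1 by [].
    have f : 0 <= M * (M - 1) by apply: mulr_ge0; lra.
    move: f; rewrite mulrBr mulr1 -expr2; lra.
  have dd := enorm_sqr z.
  have d0 := enorm_ge0 z.
  have dK' : K < enorm z by nra.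
  have dp : 0 < d i by rewrite /d -/z; lra.
  have ui : u i = (d i)^-1 *: (c i - x) by rewrite /u dp.
  pose q := dotv w (u i).
  have qz : dotv w z = - (d i * q).
    rewrite /q ui (dotvZr w (c i - x) (d i)^-1) -(opprB x (c i)) -/z (dotvNr w z).
    by rewrite mulrA mulfV ?mul1r ?opprK // gt_eqF.
  have hq : s / 2 <= q.
    have := @dotv_bound R n w (u i) a eps hk.
    rewrite -/S1 -/q (dotvC w a) -/s => h.
    have h' : `|q - s| <= s / 2 by apply: le_trans h epsS.
    move: h'; rewrite ler_norml => /andP[h1 _].
    lra.
  rewrite qz.
  have f1 : 0 <= d i * (q - s / 2) by apply: mulr_ge0; lra.
  have f2 : 0 < (d i - K) * s by apply: mulr_gt0 => //; rewrite /d -/z; lra.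
  lra.
split.
  move=> B /nbhs_ballP [e /= ep0 Be].
  pose Sa := \sum_(j < n) `|a 0 j|.
  have Sa0 : 0 <= Sa by apply: sumr_ge0.
  pose del := e / (Sa + 1).
  have del0 : 0 < del by apply: divr_gt0 => //; lra.
  have delS : del * (Sa + 1) = e by rewrite /del mulfVK //; apply/eqP; lra.
  exists (x + del *: a); split.
    rewrite /= dotvDr dotvZr.
    have : 0 < del * dotv a a by apply: mulr_gt0.
    lra.
  apply: Be; apply: ballrV2 => // jj.
  rewrite !mxE opprD addrA subrr sub0r normrN normrM (gtr0_norm del0).
  have := @coord_le_sum R n a jj; rewrite -/Sa => hj.
  have : del * `|a 0 jj| <= del * Sa by rewrite ler_pM2l.
  lra.
apply: subset_closure => /=.
by rewrite ltxx.
Qed.
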